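(* Let $\mathcal{H}$ be a Hilbert space of dimension $d$. Consider the two-sample quantum universal hypothesis testing problem: for unknown $\rho,\sigma\in\mathcal{D}(\mathcal{H})$ one is given $\sigma^{\otimes m}\otimes\rho^{\otimes n}$ and must test $H_0:\sigma=\rho$ against $H_1:\sigma\neq\rho$. Let $\alpha\in(0,1)$, $k=\min\{m,n\}$, and let $m,n\to\infty$ at the same rate (i.e. along pairs with $m/n$ and $n/m$ bounded). Then there exist decision rules $M$ (depending only on $m,n,\alpha,d$), using only independent measurements, such that for all sufficiently large $m,n$: whenever $\sigma=\rho$ (for any $\rho\in\mathcal{D}(\mathcal{H})$) the probability of declaring $H_1$ is at most $\alpha$; and for every fixed pair $\rho\neq\sigma$ there is a constant $K$ such that, for all sufficiently large $m,n$, the probability $\beta$ of declaring $H_0$ satisfies $$\beta\le\exp\!\left(-\frac{k\|\rho-\sigma\|_1^2}{344\,d^3}+K k^{1/2}\right).$$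
   Context: $\mathcal{D}(\mathcal{H})$ denotes the set of density operators on $\mathcal{H}$. A decision rule is a two-outcome POVM $\{E_0,E_1\}$ on $\mathcal{H}^{\otimes(m+n)}$ (outcome $0$: declare $H_0$; outcome $1$: declare $H_1$), not depending on the unknown states. ''Independent measurements'' means each of the $m+n$ copies is measured separately and the outcomes are classically processed. The probability of declaring $H_0$ is $\mathrm{Tr}[(\sigma^{\otimes m}\otimes\rho^{\otimes n})E_0]$. $\|X\|_1=\mathrm{Tr}\sqrt{X^\dagger X}$ is the trace norm. *)

(* Defs.v *)
From HB Require Import structures.
From mathcomp Require Import all_boot all_order all_algebra.
From mathcomp Require Import complex.
From mathcomp Require Import boolp classical_sets reals.
From mathcomp Require Import sequences exp.
Set Implicit Arguments. Unset Strict Implicit. Unset Printing Implicit Defensive.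
Import Order.TTheory GRing.Theory Num.Theory.
Local Open Scope ring_scope.

Section QDefs.
Variable R : realType.
Local Notation C := (R[i]).

Definition adjm (m n : nat) (X : 'M[C]_(m, n)) : 'M[C]_(n, m) :=
  (map_mx Num.conj X)^T.

Definition psd (d : nat) (A : 'M[C]_d) : Prop :=
  forall v : 'cV[C]_d, 0 <= (adjm v *m A *m v) 0 0.

Definition density (d : nat) (A : 'M[C]_d) : Prop := psd A /\ \tr A = 1.

(* trace norm ||X||_1 = Tr sqrt(X^dagger X), sqrt = the (unique) psd square root *)
Definition trnorm (d : nat) (X : 'M[C]_d) : R :=
  complex.Re (\tr (xget 0 [set S : 'M[C]_d | psd S /\ S *m S = adjm X *m X])).

(* Operators on H^{(x) N}, H = C^d, in the product computational basis
   indexed by words x : 'I_N -> 'I_d. *)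
Definition word (N d : nat) := {ffun 'I_N -> 'I_d}.
Definition op (N d : nat) := word N d -> word N d -> C.

Definition tensop (N d : nat) (A : 'I_N -> 'M[C]_d) : op N d :=
  fun x y => \prod_(i < N) A i (x i) (y i).

Definition idop (N d : nat) : op N d := fun x y => (x == y)%:R.

Definition trprod (N d : nat) (X E : op N d) : C :=
  \sum_(x : word N d) \sum_(y : word N d) X x y * E y x.

Definition two_sample (m n d : nat) (sigma rho : 'M[C]_d) : op (m + n) d :=
  tensop (fun i : 'I_(m + n) => if (i < m)%N then sigma else rho).

(* A decision rule using only independent (non-adaptive) measurements:
   copy i is measured with the POVM (meas i o)_{o in outcome}, and the
   outcome word o is classically (possibly randomly) processed: H_0 is
   declared with probability proc o. *)
Record indep_rule (d N : nat) := IndepRule {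
  outcome : finType;
  meas : 'I_N -> outcome -> 'M[C]_d;
  proc : {ffun 'I_N -> outcome} -> R }.
Arguments outcome {d N} _.
Arguments meas {d N} _ _ _.
Arguments proc {d N} _ _.

Definition valid_rule (d N : nat) (M : indep_rule d N) : Prop :=
  (forall i o, psd (meas M i o)) /\
  (forall i, \sum_(o : outcome M) meas M i o = 1%:M) /\
  (forall w, 0 <= proc M w <= 1).

Definition E0 (d N : nat) (M : indep_rule d N) : op N d :=
  fun x y => \sum_(w : {ffun 'I_N -> outcome M})
               ((proc M w)%:C)%C * \prod_(i < N) meas M i (w i) (x i) (y i).
Definition E1 (d N : nat) (M : indep_rule d N) : op N d :=
  fun x y => idop x y - E0 M x y.

Definition prob_H0 (d m n : nat) (M : indep_rule d (m + n)) (sigma rho : 'M[C]_d) : R :=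
  complex.Re (trprod (@two_sample m n d sigma rho) (E0 M)).
Definition prob_H1 (d m n : nat) (M : indep_rule d (m + n)) (sigma rho : 'M[C]_d) : R :=
  complex.Re (trprod (@two_sample m n d sigma rho) (E1 M)).

End QDefs.

(* Main.v *)
Require Import Defs.
From HB Require Import structures.
From mathcomp Require Import all_boot all_order all_algebra.
From mathcomp Require Import complex.
From mathcomp Require Import boolp classical_sets reals.
From mathcomp Require Import sequences exp.
Import Order.TTheory GRing.Theory Num.Theory.
Local Open Scope ring_scope.
From mathcomp Require Import ring lra.
Section T.
Variable R : realType.

Lemma exp_quad (y : R) : y <= 1/2 -> expR y <= 1 + y + 2 * y ^+ 2.
Proof.
move=> hy.
have h1 : 1 - y <= expR (- y) by rewrite -[1 - y]/(1 + - y) expR_ge1Dx.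
have h2 : expR y * (1 - y) <= 1.
  by apply: le_trans (ler_wpM2l (expR_ge0 y) h1) _; rewrite expRxMexpNx_1.
have h3 : 1 <= (1 - y) * (1 + y + 2 * y ^+ 2).
  have -> : (1 - y) * (1 + y + 2 * y ^+ 2) = 1 + y ^+ 2 * (1 - 2 * y) by ring.
  rewrite lerDl mulr_ge0 ?sqr_ge0 //; lra.
have h4 : 0 <= 1 + y + 2 * y ^+ 2 by nra.
have h5 := expR_ge0 y.
have h6 : expR y * 1 <= expR y * ((1 - y) * (1 + y + 2 * y ^+ 2)) by rewrite ler_wpM2l.
have h7 := ler_wpM2r h4 h2.
rewrite mulr1 mulrA in h6; rewrite /= mul1r in h7.
exact: le_trans h6 h7.
Qed.

Lemma mgf (O : finType) (p f : O -> R) lam : (forall o, 0 <= p o) -> \sum_o p o = 1 ->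
  (forall o, lam * f o <= 1/2) ->
  \sum_o p o * expR (lam * f o) <=
  expR (lam * \sum_o p o * f o + 2 * lam ^+ 2 * \sum_o p o * f o ^+ 2).
Proof.
move=> hp h1 hf.
apply: (le_trans _ (expR_ge1Dx _)).
apply: (@le_trans _ _ (\sum_o p o * (1 + lam * f o + 2 * (lam * f o) ^+ 2))).
  by apply: ler_sum => o _; rewrite ler_wpM2l // exp_quad.
rewrite (eq_bigr (fun o => p o + lam * (p o * f o) + 2 * lam ^+ 2 * (p o * f o ^+ 2))); last first.
  by move=> o _; ring.
by rewrite !big_split /= -!big_distrr /= h1 addrA.
Qed.

Lemma chernoff N (O : finType) (p f : 'I_N -> O -> R) (lam a : R) : 0 <= lam ->
  (forall i o, 0 <= p i o) ->
  \sum_(w : {ffun 'I_N -> O}) (\prod_i p i (w i)) * ((a <= \sum_i f i (w i))%R : bool)%:R <=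
  expR (- (lam * a)) * \prod_i \sum_o p i o * expR (lam * f i o).
Proof.
move=> hl hp.
rewrite bigA_distr_bigA /= big_distrr /=.
apply: ler_sum => w _.
rewrite big_split /= mulrCA ler_wpM2l //; first by apply: prodr_ge0 => i _.
have -> : \prod_(i < N) expR (lam * f i (w i)) = expR (\sum_(i < N) lam * f i (w i)).
  by rewrite expR_sum.
rewrite -expRD.
have [h|h] := leP a (\sum_(i < N) f i (w i)); last by rewrite expR_ge0.
rewrite -big_distrr /= -(expR0 R) ler_expR.
rewrite addrC -mulrN -mulrDr; apply: mulr_ge0 => //; lra.
Qed.

Lemma tail_bound N (O : finType) (p f : 'I_N -> O -> R) (lam a : R) : 0 <= lam ->
  (forall i o, 0 <= p i o) -> (forall i, \sum_o p i o = 1) ->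
  (forall i o, lam * f i o <= 1/2) ->
  \sum_(w : {ffun 'I_N -> O}) (\prod_i p i (w i)) * ((a <= \sum_i f i (w i))%R : bool)%:R <=
  expR (- (lam * a) + (lam * \sum_i \sum_o p i o * f i o +
        2 * lam ^+ 2 * \sum_i \sum_o p i o * f i o ^+ 2)).
Proof.
move=> hl hp h1 hf.
apply: (le_trans (chernoff _ _ p f lam a hl hp)).
rewrite expRD ler_wpM2l ?expR_ge0 //.
have -> : lam * \sum_i \sum_o p i o * f i o + 2 * lam ^+ 2 * \sum_i \sum_o p i o * f i o ^+ 2
  = \sum_i (lam * \sum_o p i o * f i o + 2 * lam ^+ 2 * \sum_o p i o * f i o ^+ 2).
  by rewrite big_split /= -!big_distrr.
rewrite expR_sum; apply: ler_prod => i _.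
rewrite sumr_ge0 /=; last by move=> o _; rewrite mulr_ge0 ?expR_ge0.
exact: mgf.
Qed.

Lemma sum_split_k m n (h : 'I_(m+n) -> R) (u v : R) :
  (forall j : 'I_m, h (lshift n j) = if (j < minn m n)%N then u else 0) ->
  (forall j : 'I_n, h (rshift m j) = if (j < minn m n)%N then v else 0) ->
  \sum_i h i = (minn m n)%:R * (u + v).
Proof.
move=> hl hr; rewrite big_split_ord /=.
under eq_bigr do rewrite hl.
under [X in _ + X]eq_bigr do rewrite hr.
rewrite -!big_mkcond /=.
rewrite -(big_ord_widen m (fun=> u)) ?geq_minl // -(big_ord_widen n (fun=> v)) ?geq_minr //.
rewrite !sumr_const !card_ord -[u *+ _]mulr_natl -[v *+ _]mulr_natl; ring.
Qed.
End T.
Notation cRe := complex.Re.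
Notation cIm := complex.Im.
Section S.
Variable R : realType.
Local Notation C := R[i].
Open Scope complex_scope.
Lemma ReD (x y : C) : cRe (x + y) = cRe x + cRe y. Proof. by case: x; case: y. Qed.
Lemma ImD (x y : C) : cIm (x + y) = cIm x + cIm y. Proof. by case: x; case: y. Qed.
Lemma ReN (x : C) : cRe (- x) = - cRe x. Proof. by case: x. Qed.
Lemma ImN (x : C) : cIm (- x) = - cIm x. Proof. by case: x. Qed.
Lemma ReM (x y : C) : cRe (x * y) = cRe x * cRe y - cIm x * cIm y. Proof. by case: x; case: y. Qed.
Lemma ImM (x y : C) : cIm (x * y) = cRe x * cIm y + cIm x * cRe y. Proof. by case: x; case: y. Qed.
Lemma Re_sum (I : Type) (r : seq I) (P : pred I) (F : I -> C) :
  cRe (\sum_(i <- r | P i) F i) = \sum_(i <- r | P i) cRe (F i).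
Proof. by elim/big_rec2: _ => // i y1 y2 _ <-; rewrite ReD. Qed.
Lemma Im_sum (I : Type) (r : seq I) (P : pred I) (F : I -> C) :
  cIm (\sum_(i <- r | P i) F i) = \sum_(i <- r | P i) cIm (F i).
Proof. by elim/big_rec2: _ => // i y1 y2 _ <-; rewrite ImD. Qed.
Lemma conjE (x : C) : Num.conj x = (cRe x) -i* (cIm x).
Proof.
case: x => a b.
have -> : a +i* b = a%:C + 'i%R * b%:C.
  by rewrite -complexiE /=; simpc.
rewrite rmorphD rmorphM /= conjCi !conj_Creal ?complex_real //.
by rewrite -complexiE /=; simpc.
Qed.
Lemma ReJ (x : C) : cRe (Num.conj x) = cRe x. Proof. by rewrite conjE. Qed.
Lemma ImJ (x : C) : cIm (Num.conj x) = - cIm x. Proof. by rewrite conjE. Qed.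
Lemma ge0C {x : C} : 0 <= x -> cIm x = 0 /\ 0 <= cRe x.
Proof. by rewrite lecE /= => /andP[/eqP -> ->]. Qed.
Lemma ReR (r : R) : cRe (r%:C) = r. Proof. by []. Qed.
Lemma ImR (r : R) : cIm (r%:C) = 0. Proof. by []. Qed.
Lemma C_ext (x y : C) : cRe x = cRe y -> cIm x = cIm y -> x = y.
Proof. by case: x; case: y => /= ? ? ? ? -> ->. Qed.

Variable d : nat.
Definition ev (a b : 'I_d) (phi : C) (x : 'I_d) : C := (x == a)%:R + phi * (x == b)%:R.
Definition vv a b phi : 'cV[C]_d := \col_x ev a b phi x.

Lemma sum_ind (F : 'I_d -> C) a : \sum_x (x == a)%:R * F x = F a.
Proof.
rewrite (bigD1 a) //= eqxx mul1r big1 ?addr0 // => x /negbTE ->; by rewrite mul0r.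
Qed.
Lemma sum_ev (F : 'I_d -> C) a b phi : \sum_x ev a b phi x * F x = F a + phi * F b.
Proof.
rewrite /ev; under eq_bigr do rewrite mulrDl -mulrA.
by rewrite big_split /= sum_ind -mulr_sumr sum_ind.
Qed.
Lemma conj_ev a b phi x : Num.conj (ev a b phi x) = ev a b (Num.conj phi) x.
Proof. by rewrite /ev rmorphD rmorphM /= !conjC_nat. Qed.

Lemma quad_vv (A : 'M[C]_d) a b phi :
  (adjm (vv a b phi) *m A *m vv a b phi) 0 0 =
  A a a + phi * A a b + Num.conj phi * A b a + Num.conj phi * phi * A b b.
Proof.
rewrite mxE.
under eq_bigr => y _.
  rewrite mxE.
  under eq_bigr do rewrite /adjm !mxE conj_ev.
  rewrite sum_ev mxE mulrC.
  over.
rewrite /= sum_ev.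
rewrite !mulrDr !mulrA.
rewrite [phi * Num.conj phi]mulrC.
by rewrite -!addrA; congr (_ + _); rewrite addrC -!addrA; congr (_ + _); rewrite addrC.
Qed.

Lemma psd_herm (A : 'M[C]_d) : psd A -> forall a b, A b a = Num.conj (A a b).
Proof.
move=> hA a b.
have h1 := ge0C (hA (vv a a 0)).
have h2 := ge0C (hA (vv b b 0)).
have h3 := ge0C (hA (vv a b 1)).
have h4 := ge0C (hA (vv a b 'i%C)).
move: h1 h2 h3 h4; rewrite !quad_vv !conjE /=.
rewrite !(ImD, ImM, ReM) /=.
move=> [e1 _] [e2 _] [e3 _] [e4 _].
by apply: C_ext; rewrite ?conjE /=; lra.
Qed.

Hypothesis hd : (0 < d)%N.
Definition phase (k : 'I_4) : C :=
  if val k == 0%N then 1 else if val k == 1%N then -1 else if val k == 2%N then 'i else - 'i.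
Definition cst : R := ((8 * d)%:R)^-1.
Definition Oc := ('I_d * 'I_d * 'I_4)%type.
Definition Mo (o : Oc) : 'M[C]_d :=
  \matrix_(x, y) (cst%:C * (ev o.1.1 o.1.2 (phase o.2) x * Num.conj (ev o.1.1 o.1.2 (phase o.2) y))).

Lemma cst_ge0 : 0 <= cst.
Proof. by rewrite /cst invr_ge0 ler0n. Qed.

Lemma Mo_psd o : psd (Mo o).
Proof.
move=> u.
pose z := \sum_x Num.conj (u x 0) * ev o.1.1 o.1.2 (phase o.2) x.
have -> : (adjm u *m Mo o *m u) 0 0 = cst%:C * (Num.conj z * z).
  rewrite /z rmorph_sum /= big_distrl /= big_distrr /= mxE.
  apply: eq_bigr => y _.
  rewrite mxE big_distrl /= big_distrr /= big_distrr /=.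
  apply: eq_bigr => x _.
  rewrite /adjm !mxE rmorphM /= conjCK.
  ring.
have h1 : (0 : C) <= cst%:C by rewrite ler0c cst_ge0.
have h2 := mul_conjC_ge0 z.
rewrite [Num.conj z * z]mulrC.
exact: mulr_ge0.
Qed.

Lemma natC n : (n%:R : C) = (n%:R : R)%:C.
Proof. by rewrite rmorph_nat. Qed.

Lemma phase_sum (al be al' be' : C) :
  \sum_(k < 4) (al + phase k * be) * (al' + Num.conj (phase k) * be') =
  4%:R * (al * al' + be * be').
Proof.
rewrite !big_ord_recl big_ord0 /phase /= !conjE /= natC.
apply: C_ext; rewrite !(ReD, ReM, ImD, ImM, ReN, ImN) /=; ring.
Qed.

Lemma sum_Oc (V : nmodType) (G : Oc -> V) : \sum_o G o = \sum_a \sum_b \sum_k G (a, b, k).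
Proof.
have -> : \sum_o G o = \sum_(p : 'I_d * 'I_d) \sum_k G (p, k).
  by rewrite pair_bigA; apply: eq_bigr => -[p k].
by rewrite [RHS]pair_bigA; apply: eq_bigr => -[a b].
Qed.

Lemma sum_ind2 (x y : 'I_d) : \sum_a ((x == a)%:R * (y == a)%:R : C) = (x == y)%:R.
Proof.
under eq_bigr do rewrite eq_sym.
by rewrite sum_ind eq_sym.
Qed.

Lemma Mo_sum : \sum_o Mo o = 1%:M.
Proof.
apply/matrixP => x y; rewrite summxE [RHS]mxE sum_Oc.
have inner : forall a b, \sum_k (Mo (a,b,k)) x y =
   cst%:C * (4%:R * ((x==a)%:R * (y==a)%:R + (x==b)%:R*(y==b)%:R)).
  move=> a b; under eq_bigr do rewrite mxE.
  rewrite -big_distrr /=; congr (_ * _).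
  under eq_bigr do rewrite /= conj_ev /ev.
  rewrite (phase_sum ((x==a)%:R) ((x==b)%:R)).
  done.
under eq_bigr do under eq_bigr do rewrite inner.
under eq_bigr do rewrite -big_distrr /=.
rewrite -big_distrr /=.
under eq_bigr do rewrite -big_distrr /=.
rewrite -big_distrr /=.
under eq_bigr do rewrite big_split /= sumr_const card_ord.
rewrite big_split /= sumr_const card_ord sumrMnl !sum_ind2.
rewrite /cst fmorphV /= rmorph_nat -[(x == y)%:R *+ d]mulr_natr natrM.
have hd' : (d%:R : C) != 0 by rewrite pnatr_eq0 -lt0n.
by field.
Qed.

Lemma sum_ind_r (T : finType) (F : T -> C) a : \sum_x F x * (x == a)%:R = F a.
Proof.
rewrite (bigD1 a) //= eqxx mulr1 big1 ?addr0 // => x /negbTE ->; by rewrite mulr0.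
Qed.

Definition tt (A : 'M[C]_d) (o : Oc) : C := \sum_a \sum_b A a b * Mo o b a.
Definition pr (A : 'M[C]_d) (o : Oc) : R := cRe (tt A o).

Lemma tt_quad A o : tt A o =
  cst%:C * (adjm (vv o.1.1 o.1.2 (phase o.2)) *m A *m vv o.1.1 o.1.2 (phase o.2)) 0 0.
Proof.
rewrite /tt exchange_big mxE big_distrr /=.
apply: eq_bigr => b _.
rewrite mxE big_distrl big_distrr /=.
apply: eq_bigr => a _.
rewrite /adjm !mxE conj_ev /=.
ring.
Qed.

Lemma tt_real A o : psd A -> tt A o = (pr A o)%:C /\ 0 <= pr A o.
Proof.
move=> hA; have [h1 h2] := ge0C (hA (vv o.1.1 o.1.2 (phase o.2))).
rewrite /pr tt_quad; split.
  by apply: C_ext; rewrite /= ?ReM ?ImM /= ?h1 ?mulr0 ?mul0r ?addr0 ?subr0.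
by rewrite ReM /= mul0r subr0 mulr_ge0 // cst_ge0.
Qed.

Lemma sum_tt A : \sum_o tt A o = \tr A.
Proof.
rewrite /tt exchange_big /=.
apply: eq_bigr => a _.
rewrite exchange_big /=.
under eq_bigr do rewrite -big_distrr /= -summxE Mo_sum mxE.
exact: sum_ind_r.
Qed.

Lemma sum_pr A : density A -> \sum_o pr A o = 1.
Proof.
by case=> _ htr; rewrite /pr -Re_sum sum_tt htr.
Qed.

Lemma phase_norm k : Num.conj (phase k) * phase k = 1.
Proof.
by rewrite conjE; apply: C_ext; case: k => [[|[|[|[|k]]]] hk] //=; rewrite ?ReM ?ImM /=; lra.
Qed.

Lemma pr_diff (sg rh : 'M[C]_d) : psd sg -> psd rh -> forall a b k,
  pr sg (a,b,k) - pr rh (a,b,k) =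
  cst * (cRe (sg a a) - cRe (rh a a) + (cRe (sg b b) - cRe (rh b b)) +
         2 * cRe (phase k * (sg a b - rh a b))).
Proof.
move=> hs hr a b k.
rewrite /pr !tt_quad !quad_vv /= (psd_herm _ hs a b) (psd_herm _ hr a b) phase_norm !mul1r.
rewrite !(ReD, ReM, ImD, ImM, ReN, ImN, ReJ, ImJ) /=.
ring.
Qed.

Lemma abs2 (u v : R) : 4 * `|v| <= `|u + 2 * v| + `|u - 2 * v|.
Proof.
have := ler_normB (u + 2 * v) (u - 2 * v).
have -> : u + 2 * v - (u - 2 * v) = 4 * v by ring.
by rewrite normrM ger0_norm.
Qed.

Lemma four_abs (c D P Q t1 t2 t3 t4 : R) : 0 <= c ->
  t1 = c * (D + 2 * P) -> t2 = c * (D - 2 * P) ->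
  t3 = c * (D - 2 * Q) -> t4 = c * (D + 2 * Q) ->
  c * 4 * (`|P| + `|Q|) <= `|t1| + (`|t2| + (`|t3| + `|t4|)).
Proof.
move=> hc -> -> -> ->.
rewrite !normrM (ger0_norm hc).
have h1 := abs2 D P.
have h2 := abs2 D Q.
have h3 : 0 <= c by [].
nra.
Qed.

Definition Lb (X : 'M[C]_d) : R := \sum_a \sum_b (`|cRe (X a b)| + `|cIm (X a b)|).

Lemma mu_bound sg rh : psd sg -> psd rh ->
  cst * 4 * Lb (sg - rh) <= \sum_o `|pr sg o - pr rh o|.
Proof.
move=> hs hr.
rewrite sum_Oc /Lb big_distrr /=; apply: ler_sum => a _.
rewrite big_distrr /=; apply: ler_sum => b _.
rewrite !big_ord_recl big_ord0 addr0 !(pr_diff _ _ hs hr) /phase /= !mxE.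
apply: (four_abs _ (cRe (sg a a) - cRe (rh a a) + (cRe (sg b b) - cRe (rh b b))));
  rewrite ?cst_ge0 // !(ReM, ReD, ReN, ImD, ImN) /=; ring.
Qed.

Lemma cauchy (r : 'I_d -> R) : (\sum_a r a) ^+ 2 <= d%:R * \sum_a r a ^+ 2.
Proof.
set S := \sum_a r a; set Q := \sum_a r a ^+ 2.
have inner a : \sum_b (r a - r b) ^+ 2 = d%:R * r a ^+ 2 - 2 * r a * S + Q.
  rewrite (eq_bigr (fun b => (r a ^+ 2 + r b ^+ 2) - 2 * r a * r b)); last first.
    by move=> b _; ring.
  rewrite sumrB big_split /= sumr_const card_ord -big_distrr /=.
  rewrite -[r a ^+ 2 *+ d]mulr_natl /S /Q; ring.
have h0 : 0 <= \sum_a \sum_b (r a - r b) ^+ 2.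
  by apply: sumr_ge0 => a _; apply: sumr_ge0 => b _; exact: sqr_ge0.
move: h0.
rewrite (eq_bigr (fun a => d%:R * r a ^+ 2 + (-2 * S) * r a + Q)); last first.
  by move=> a _; rewrite inner; ring.
rewrite !big_split /= -!big_distrr /= sumr_const card_ord -/S -/Q -[Q *+ d]mulr_natl => h0.
nra.
Qed.

Lemma sumsq (I : finType) (t : I -> R) : (forall i, 0 <= t i) ->
  \sum_i t i ^+ 2 <= (\sum_i t i) ^+ 2.
Proof.
move=> ht.
suff : 0 <= \sum_i t i /\ \sum_i t i ^+ 2 <= (\sum_i t i) ^+ 2 by case.
elim/big_rec2: _ => [|i y1 y2 _ [h1 h2]]; first by rewrite expr0n /=.
have := ht i => h3.
split; first exact: addr_ge0.
nra.
Qed.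

Definition nrm (z : C) : R := cRe z ^+ 2 + cIm z ^+ 2.

Lemma trnorm_bound (X : 'M[C]_d) : trnorm X ^+ 2 <= d%:R * Lb X ^+ 2.
Proof.
have hLb : 0 <= Lb X.
  by apply: sumr_ge0 => a _; apply: sumr_ge0 => b _; apply: addr_ge0.
rewrite /trnorm.
set P := (X in xget 0 X).
case: (pselect (exists S, P S)) => [ex|nex]; last first.
  rewrite xgetPN; last by move=> S hS; apply: nex; exists S.
  rewrite mxtrace0 /= expr0n /=.
  by apply: mulr_ge0 => //; exact: sqr_ge0.
have [hS hSS] := xgetPex 0 ex.
set S := xget 0 P in hS hSS *.
have e1 : cRe (\tr S) = \sum_a cRe (S a a) by rewrite /mxtrace Re_sum.
have e2 : \sum_a \sum_b nrm (S a b) = cRe (\tr (S *m S)).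
  rewrite /mxtrace Re_sum; apply: eq_bigr => a _.
  rewrite mxE Re_sum; apply: eq_bigr => b _.
  by rewrite (psd_herm _ hS a b) /nrm ReM ReJ ImJ; ring.
have e3 : cRe (\tr (adjm X *m X)) = \sum_a \sum_b nrm (X a b).
  rewrite /mxtrace Re_sum exchange_big /=; apply: eq_bigr => b _.
  rewrite mxE Re_sum; apply: eq_bigr => a _.
  by rewrite /adjm !mxE /nrm ReM ReJ ImJ; ring.
have h1 : \sum_a cRe (S a a) ^+ 2 <= \sum_a \sum_b nrm (S a b).
  apply: ler_sum => a _.
  rewrite (bigD1 a) //= -[X in X <= _]addr0 lerD //.
    by rewrite /nrm lerDl sqr_ge0.
  by apply: sumr_ge0 => b _; rewrite /nrm addr_ge0 // sqr_ge0.
have h2 : \sum_a \sum_b nrm (X a b) <= Lb X ^+ 2.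
  apply: (@le_trans _ _ (\sum_a (\sum_b (`|cRe (X a b)| + `|cIm (X a b)|)) ^+ 2)); last first.
    by apply: sumsq => a; apply: sumr_ge0 => b _; apply: addr_ge0.
  apply: ler_sum => a _.
  apply: (@le_trans _ _ (\sum_b (`|cRe (X a b)| + `|cIm (X a b)|) ^+ 2)); last first.
    by apply: sumsq => b; apply: addr_ge0.
  apply: ler_sum => b _.
  rewrite /nrm -(real_normK (num_real (cRe (X a b)))) -(real_normK (num_real (cIm (X a b)))).
  have := normr_ge0 (cRe (X a b)); have := normr_ge0 (cIm (X a b)).
  nra.
rewrite e1.
apply: (le_trans (cauchy _)).
rewrite ler_pM2l ?ltr0n //.
apply: (le_trans h1); rewrite e2 hSS e3 //.
Qed.

Lemma distr2 N (F : 'I_N -> 'I_d -> 'I_d -> C) :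
  \sum_(x : word N d) \sum_(y : word N d) \prod_i F i (x i) (y i) =
  \prod_i \sum_a \sum_b F i a b.
Proof.
rewrite [RHS]bigA_distr_bigA; apply: eq_bigr => x _.
by rewrite bigA_distr_bigA.
Qed.

Lemma trprod_E0 N (A : 'I_N -> 'M[C]_d) (M : indep_rule R d N) :
  trprod (tensop A) (E0 M) =
  \sum_w (@proc _ _ _ M w)%:C * \prod_i (\sum_a \sum_b A i a b * @meas _ _ _ M i (w i) b a).
Proof.
rewrite /trprod /E0 /tensop.
under eq_bigr do under eq_bigr do rewrite big_distrr /=.
under eq_bigr do rewrite exchange_big /=.
rewrite exchange_big /=.
apply: eq_bigr => w _.
under eq_bigr do under eq_bigr do rewrite mulrCA -big_split /=.
under eq_bigr do rewrite -big_distrr /=.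
rewrite -big_distrr /=; congr (_ * _).
exact: (distr2 _ (fun i a b => A i a b * @meas _ _ _ M i (w i) b a)).
Qed.

Lemma trprod_id N (A : 'I_N -> 'M[C]_d) :
  trprod (tensop A) (@idop R N d) = \prod_i \tr (A i).
Proof.
rewrite /trprod /idop /tensop.
under [LHS]eq_bigr => x _ do rewrite (sum_ind_r _ (fun y : {ffun 'I_N -> 'I_d} => \prod_(i < N) A i (x i) (y i)) x).
by rewrite /mxtrace [RHS]bigA_distr_bigA.
Qed.

Definition sgn (g : {ffun Oc -> bool}) (o : Oc) : R := if g o then 1 else -1.
Definition coef m n (i : 'I_(m + n)) : R :=
  match split i with
  | inl j => ((j < minn m n)%N)%:R
  | inr j => - ((j < minn m n)%N)%:R
  end.
Definition fs m n g (i : 'I_(m + n)) (o : Oc) : R := coef m n i * sgn g o.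
Definition Sg m n g (w : {ffun 'I_(m + n) -> Oc}) : R := \sum_i fs m n g i (w i).
Definition thr (Cc : R) (m n : nat) : R := Cc * Num.sqrt (minn m n)%:R.
Definition procf Cc m n (w : {ffun 'I_(m + n) -> Oc}) : R :=
  if [exists g, thr Cc m n <= Sg m n g w] then 0 else 1.
Definition rule Cc m n : indep_rule R d (m + n) :=
  @IndepRule R d (m + n) Oc (fun _ o => Mo o) (procf Cc m n).

Lemma rule_valid Cc m n : valid_rule (rule Cc m n).
Proof.
split; first by move=> i o; exact: Mo_psd.
split; first by move=> i; exact: Mo_sum.
by move=> w; rewrite /= /procf; case: ifP => _; rewrite ?lexx ?ler01.
Qed.

Definition Ai m n (sg rh : 'M[C]_d) (i : 'I_(m + n)) := if (i < m)%N then sg else rh.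

Lemma prob_H0_eq Cc m n sg rh : psd sg -> psd rh ->
  prob_H0 (rule Cc m n) sg rh =
  \sum_w procf Cc m n w * \prod_i pr (Ai m n sg rh i) (w i).
Proof.
move=> hs hr.
have hA i : psd (Ai m n sg rh i) by rewrite /Ai; case: ifP.
rewrite /prob_H0 /two_sample trprod_E0.
rewrite (eq_bigr (fun w => (procf Cc m n w * \prod_i pr (Ai m n sg rh i) (w i))%:C)); last first.
  move=> w _; rewrite rmorphM /= rmorph_prod; congr (_ * _).
  apply: eq_bigr => i _.
  exact: (tt_real _ _ (hA i)).1.
by rewrite -rmorph_sum.
Qed.

Lemma prob_H1_eq Cc m n sg rh : density sg -> density rh ->
  prob_H1 (rule Cc m n) sg rh = 1 - prob_H0 (rule Cc m n) sg rh.
Proof.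
move=> hs hr.
rewrite /prob_H1 /prob_H0 /trprod /E1.
under eq_bigr do under eq_bigr do rewrite mulrBr.
under eq_bigr do rewrite sumrB.
rewrite sumrB ReD ReN.
have := trprod_id _ (Ai m n sg rh); rewrite /trprod /two_sample => ->.
rewrite big1 // => i _; rewrite /Ai; case: ifP => _; [exact: hs.2 | exact: hr.2].
Qed.

Lemma coef_l m n (j : 'I_m) : coef m n (lshift n j) = ((j < minn m n)%N)%:R.
Proof. by rewrite /coef (unsplitK (inl _ j)). Qed.
Lemma coef_r m n (j : 'I_n) : coef m n (rshift m j) = - ((j < minn m n)%N)%:R.
Proof. by rewrite /coef (unsplitK (inr _ j)). Qed.
Lemma Ai_l m n sg rh (j : 'I_m) : Ai m n sg rh (lshift n j) = sg.
Proof. by rewrite /Ai /= ltn_ord. Qed.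
Lemma Ai_r m n sg rh (j : 'I_n) : Ai m n sg rh (rshift m j) = rh.
Proof. by rewrite /Ai /= ltnNge leq_addr. Qed.

Lemma sgn2 g o : sgn g o ^+ 2 = 1.
Proof. by rewrite /sgn; case: (g o); rewrite ?sqrrN expr1n. Qed.

Lemma fs_bound m n g i o : `|fs m n g i o| <= 1.
Proof.
rewrite /fs /coef /sgn normrM.
have -> : `|(if g o then 1 else -1) : R| = 1 by case: (g o); rewrite ?normrN normr1.
rewrite mulr1; case: (split i) => j; rewrite ?normrN; case: (j < _)%N;
  by rewrite ?normr0 ?normr1 ?ler01.
Qed.

Lemma lam_f (lam x : R) : 0 <= lam -> lam <= 1/2 -> `|x| <= 1 -> lam * x <= 1/2.
Proof.
move=> h0 h1 hx.
have hx' : x <= 1 by apply: le_trans (ler_norm x) hx.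
nra.
Qed.

Definition Ex (A : 'M[C]_d) g : R := \sum_o pr A o * sgn g o.

Lemma mom1 m n g sg rh :
  \sum_i \sum_o pr (Ai m n sg rh i) o * fs m n g i o =
  (minn m n)%:R * (Ex sg g + - Ex rh g).
Proof.
apply: sum_split_k => j.
  rewrite Ai_l /fs coef_l; case: (j < _)%N.
    by apply: eq_bigr => o _; rewrite mul1r.
  by rewrite big1 // => o _; rewrite mul0r mulr0.
rewrite Ai_r /fs coef_r; case: (j < _)%N.
  by rewrite /Ex -sumrN; apply: eq_bigr => o _; rewrite mulN1r mulrN.
by rewrite big1 // => o _; rewrite oppr0 mul0r mulr0.
Qed.

Lemma mom2 m n g sg rh : density sg -> density rh ->
  \sum_i \sum_o pr (Ai m n sg rh i) o * fs m n g i o ^+ 2 = (minn m n)%:R * (1 + 1).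
Proof.
move=> hs hr.
apply: sum_split_k => j.
  rewrite Ai_l /fs coef_l; case: (j < _)%N.
    by rewrite -[RHS](sum_pr _ hs); apply: eq_bigr => o _; rewrite exprMn sgn2 /= mulr1n expr1n !mulr1.
  by rewrite big1 // => o _; rewrite mul0r expr0n mulr0.
rewrite Ai_r /fs coef_r; case: (j < _)%N.
  by rewrite -[RHS](sum_pr _ hr); apply: eq_bigr => o _; rewrite exprMn sgn2 /= mulr1n sqrrN expr1n !mulr1.
by rewrite big1 // => o _; rewrite oppr0 mul0r expr0n mulr0.
Qed.

Lemma sumP1 m n sg rh : density sg -> density rh ->
  \sum_(w : {ffun 'I_(m + n) -> Oc}) \prod_i pr (Ai m n sg rh i) (w i) = 1.
Proof.
move=> hs hr.
transitivity (\prod_(i < m + n) \sum_(o : Oc) pr (Ai m n sg rh i) o).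
  by rewrite bigA_distr_bigA.
rewrite big1 // => i _.
by rewrite /Ai; case: ifP => _; rewrite sum_pr.
Qed.

Lemma P_ge0 m n sg rh (w : {ffun 'I_(m + n) -> Oc}) : psd sg -> psd rh ->
  0 <= \prod_i pr (Ai m n sg rh i) (w i).
Proof.
move=> hs hr; apply: prodr_ge0 => i _.
by rewrite /Ai; case: ifP => _; [exact: (tt_real _ _ hs).2 | exact: (tt_real _ _ hr).2].
Qed.

Lemma F_bound (F a : R) : 0 <= F -> 0 < a -> F * expR (- (F / a)) <= a.
Proof.
move=> hF ha.
rewrite expRN ler_pdivrMr ?expR_gt0 //.
apply: (@le_trans _ _ (a * (1 + F / a))); last first.
  by apply: ler_wpM2l; [exact: ltW | exact: expR_ge1Dx].
have -> : a * (1 + F / a) = a + F by field; rewrite lt0r_neq0.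
by rewrite lerDr ltW.
Qed.

Lemma final_ineq (k T mu L dd : R) : 0 < dd -> 0 <= k -> 0 <= mu -> 0 <= L ->
  T ^+ 2 <= dd * L ^+ 2 -> (8 * dd)^-1 * 4 * L <= mu ->
  k * T ^+ 2 / (344 * dd ^+ 3) <= k * mu ^+ 2 / 16.
Proof.
move=> hd0 hk hmu hL hT h.
have e : (8 * dd)^-1 * 4 * L = L / (2 * dd) by field; rewrite lt0r_neq0.
rewrite e ler_pdivrMr ?mulr_gt0 // in h.
have hL2 : L ^+ 2 <= (mu * (2 * dd)) ^+ 2 by nra.
have hT2 : T ^+ 2 <= 4 * dd ^+ 3 * mu ^+ 2.
  apply: (le_trans hT).
  have := ler_wpM2l (ltW hd0) hL2.
  have -> : dd * (mu * (2 * dd)) ^+ 2 = 4 * dd ^+ 3 * mu ^+ 2 by ring.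
  by [].
rewrite ler_pdivrMr ?mulr_gt0 ?exprn_gt0 //.
have h1 := ler_wpM2l hk hT2.
apply: (le_trans h1).
have h2 : 0 <= k * dd ^+ 3 * mu ^+ 2.
  by apply: mulr_ge0; [apply: mulr_ge0 => //; apply: exprn_ge0; exact: ltW | exact: sqr_ge0].
have -> : k * mu ^+ 2 / 16 * (344 * dd ^+ 3) = (344 / 16) * (k * dd ^+ 3 * mu ^+ 2) by field.
have -> : k * (4 * dd ^+ 3 * mu ^+ 2) = 4 * (k * dd ^+ 3 * mu ^+ 2) by ring.
rewrite ler_wpM2r //.
rewrite ler_pdivlMr //; lra.
Qed.

Lemma Lb_opp (X Y : 'M[C]_d) : Lb (X - Y) = Lb (Y - X).
Proof.
apply: eq_bigr => a _; apply: eq_bigr => b _.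
rewrite !mxE -[X a b - Y a b]opprB ReN ImN !normrN //.
Qed.

Lemma Ex_diff sg rh :
  Ex sg [ffun o => pr rh o <= pr sg o] + - Ex rh [ffun o => pr rh o <= pr sg o] =
  \sum_o `|pr sg o - pr rh o|.
Proof.
rewrite /Ex -sumrN -big_split /=; apply: eq_bigr => o _.
rewrite /sgn ffunE; case: lerP => h.
  by rewrite !mulr1.
by rewrite !mulrN1 opprK addrC.
Qed.

Lemma alg2 (mu Cc s k : R) : - (mu / 8 * - (Cc * s)) + (mu / 8 * - (k * mu) +
    2 * (mu / 8) ^+ 2 * (k * (1 + 1))) = - (k * mu ^+ 2 / 16) + mu * Cc / 8 * s.
Proof. by field; rewrite ?pnatr_eq0. Qed.

Lemma main_thm (alpha : R) : 0 < alpha < 1 ->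
  exists M : forall m n : nat, indep_rule R d (m + n),
    (forall m n, valid_rule (M m n)) /\
    forall c : nat,
      (exists N0 : nat, forall m n : nat,
          (N0 <= m)%N -> (N0 <= n)%N -> (m <= c * n)%N -> (n <= c * m)%N ->
          forall rho : 'M[R[i]]_d, density rho ->
            prob_H1 (M m n) rho rho <= alpha) /\
      (forall rho sigma : 'M[R[i]]_d, density rho -> density sigma -> rho <> sigma ->
         exists K : R, exists N1 : nat, forall m n : nat,
           (N1 <= m)%N -> (N1 <= n)%N -> (m <= c * n)%N -> (n <= c * m)%N ->
           prob_H0 (M m n) sigma rho <=
             expR (- ((minn m n)%:R * trnorm (rho - sigma) ^+ 2) / (344 * d%:R ^+ 3)
                   + K * Num.sqrt ((minn m n)%:R))).
Proof.
case/andP => ha0 ha1.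
pose F : R := #|{ffun Oc -> bool}|%:R.
have hF0 : 0 <= F by rewrite ler0n.
have hq0 : 0 <= 16 * F / alpha.
  by apply: divr_ge0; [apply: mulr_ge0 | exact: ltW].
pose Cc := Num.sqrt (16 * F / alpha).
have hCc0 : 0 <= Cc := sqrtr_ge0 _.
have hCc2 : Cc ^+ 2 = 16 * F / alpha := sqr_sqrtr hq0.
exists (rule Cc); split; first by move=> m n; exact: rule_valid.
move=> c; split.
  exists (Num.trunc (F / alpha)).+1 => m n hm hn _ _ rho hrho.
  have hpsd := hrho.1.
  have hk : ((Num.trunc (F / alpha)).+1 <= minn m n)%N by rewrite leq_min hm hn.
  have hkF : F / alpha < (minn m n)%:R.
    by apply: (lt_le_trans (truncnS_gt _)); rewrite ler_nat.
  have hFa : 0 <= F / alpha by rewrite divr_ge0 // ltW.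
  have hk0 : 0 < (minn m n)%:R :> R by apply: le_lt_trans hFa hkF.
  pose s := Num.sqrt (minn m n)%:R : R.
  have hs0 : 0 < s by rewrite sqrtr_gt0.
  have hs2 : s ^+ 2 = (minn m n)%:R by rewrite sqr_sqrtr // ltW.
  pose lam := Cc / (8 * s).
  have hl0 : 0 <= lam by rewrite divr_ge0 // mulr_ge0 // ltW.
  have hl1 : lam <= 1/2.
    rewrite ler_pdivrMr ?mulr_gt0 //.
    have : Cc ^+ 2 <= 16 * s ^+ 2.
      rewrite hCc2 hs2 -mulrA; apply: ler_wpM2l => //; exact: ltW hkF.
    nra.
  rewrite prob_H1_eq // prob_H0_eq //.
  have e : 1 - \sum_(w : {ffun 'I_(m + n) -> Oc}) procf Cc m n w * \prod_i pr (Ai m n rho rho i) (w i) =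
           \sum_(w : {ffun 'I_(m + n) -> Oc}) \prod_i pr (Ai m n rho rho i) (w i) * (1 - procf Cc m n w).
    rewrite -[X in X - _](sumP1 m n rho rho hrho hrho) -sumrB.
    by apply: eq_bigr => w _; ring.
  rewrite e.
  apply: (@le_trans _ _ (\sum_(g : {ffun Oc -> bool}) \sum_(w : {ffun 'I_(m + n) -> Oc})
     \prod_i pr (Ai m n rho rho i) (w i) *
       ((thr Cc m n <= \sum_i fs m n g i (w i))%R : bool)%:R)).
    rewrite [X in _ <= X]exchange_big /=; apply: ler_sum => w _.
    rewrite -big_distrr /=; apply: ler_wpM2l; first exact: P_ge0.
    rewrite /procf; case: ifP => [/existsP [g0 hg0]|_]; last first.
      by rewrite subrr; apply: sumr_ge0 => g _; rewrite ler0n.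
    rewrite subr0 (bigD1 g0) //=.
    have -> : (thr Cc m n <= \sum_i fs m n g0 i (w i)) = true by exact: hg0.
    by rewrite lerDl; apply: sumr_ge0 => g _; rewrite ler0n.
  apply: (@le_trans _ _ (\sum_(g : {ffun Oc -> bool}) expR (- (Cc ^+ 2 / 16)))).
    apply: ler_sum => g _.
    apply: le_trans (tail_bound _ _ _ (fun i o => pr (Ai m n rho rho i) o)
       (fun i o => fs m n g i o) lam (thr Cc m n) hl0 _ _ _) _.
    - by move=> i o; rewrite /Ai if_same; exact: (tt_real _ _ hpsd).2.
    - by move=> i; rewrite /Ai if_same sum_pr.
    - by move=> i o; apply: lam_f => //; exact: fs_bound.
    rewrite mom1 mom2 // subrr !mulr0 add0r ler_expR /lam /thr -/s.
    have -> : - (Cc / (8 * s) * (Cc * s)) + 2 * (Cc / (8 * s)) ^+ 2 * ((minn m n)%:R * (1 + 1))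
      = - (Cc ^+ 2 / 16).
      by rewrite -hs2; field; rewrite gt_eqF.
    by [].
  rewrite sumr_const -[_ *+ #|_|]mulr_natl.
  change (F * expR (- (Cc ^+ 2 / 16)) <= alpha).
  rewrite hCc2.
  have -> : 16 * F / alpha / 16 = F / alpha by field; rewrite gt_eqF.
  exact: F_bound.
move=> rho sigma hrho hsig hne.
pose g := [ffun o => pr rho o <= pr sigma o] : {ffun Oc -> bool}.
pose mu := \sum_o `|pr sigma o - pr rho o|.
exists (mu * Cc / 8), 0%N => m n _ _ _ _.
have hmu0 : 0 <= mu by apply: sumr_ge0 => o _.
have hmu2 : mu <= 2.
  apply: (@le_trans _ _ (\sum_o (pr sigma o + pr rho o))).
    apply: ler_sum => o _.
    apply: (le_trans (ler_normB _ _)).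
    by rewrite !ger0_norm ?(tt_real _ _ hsig.1).2 ?(tt_real _ _ hrho.1).2.
  by rewrite big_split /= !sum_pr.
pose s := Num.sqrt (minn m n)%:R : R.
have hs0 : 0 <= s by rewrite sqrtr_ge0.
have hs2 : s ^+ 2 = (minn m n)%:R by rewrite sqr_sqrtr // ler0n.
pose lam := mu / 8.
have hl0 : 0 <= lam by rewrite divr_ge0.
have hl1 : lam <= 1/2 by rewrite /lam; lra.
rewrite prob_H0_eq; [|exact: hsig.1|exact: hrho.1].
apply: (@le_trans _ _ (\sum_(w : {ffun 'I_(m + n) -> Oc}) \prod_i pr (Ai m n sigma rho i) (w i) *
   ((- thr Cc m n <= \sum_i (- fs m n g i (w i)))%R : bool)%:R)).
  apply: ler_sum => w _; rewrite mulrC; apply: ler_wpM2l; first exact: P_ge0 hsig.1 hrho.1.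
  rewrite /procf; case: ifP => [_|/negbT hne']; first by rewrite ler0n.
  have h : ~~ (thr Cc m n <= Sg m n g w) by move/existsPn: hne' => /(_ g).
  rewrite -ltNge in h.
  by rewrite sumrN lerN2 (ltW h).
apply: le_trans (tail_bound _ _ _ (fun i o => pr (Ai m n sigma rho i) o)
   (fun i o => - fs m n g i o) lam (- thr Cc m n) hl0 _ _ _) _.
- move=> i o; rewrite /Ai; case: ifP => _.
    exact: (tt_real _ _ hsig.1).2.
  exact: (tt_real _ _ hrho.1).2.
- by move=> i; rewrite /Ai; case: ifP => _; rewrite sum_pr.
- by move=> i o; apply: lam_f => //; rewrite normrN; exact: fs_bound.
rewrite [X in 2 * _ * X](eq_bigr (fun i => \sum_o pr (Ai m n sigma rho i) o * fs m n g i o ^+ 2)); last first.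
  by move=> i _; apply: eq_bigr => o _; rewrite sqrrN.
rewrite (eq_bigr (fun i => - \sum_o pr (Ai m n sigma rho i) o * fs m n g i o)); last first.
  by move=> i _; rewrite -sumrN; apply: eq_bigr => o _; rewrite mulrN.
rewrite sumrN mom1 mom2 // Ex_diff -/mu ler_expR /lam /thr -/s.
rewrite alg2.
rewrite lerD2r mulNr lerN2.
apply: (final_ineq ((minn m n)%:R) (trnorm (rho - sigma)) mu (Lb (rho - sigma)) (d%:R)).
- by rewrite ltr0n.
- by rewrite ler0n.
- exact: hmu0.
- by apply: sumr_ge0 => a _; apply: sumr_ge0 => b _; apply: addr_ge0.
- exact: trnorm_bound.
- rewrite Lb_opp.
  have -> : (8 * d%:R : R) = (8 * d)%:R by rewrite natrM.
  exact: (mu_bound _ _ hsig.1 hrho.1).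
Qed.
End S.

Theorem theorem5 (R : realType) (d : nat) (alpha : R) :
  (0 < d)%N -> 0 < alpha < 1 ->
  exists M : forall m n : nat, indep_rule R d (m + n),
    (forall m n, valid_rule (M m n)) /\
    forall c : nat,
      (exists N0 : nat, forall m n : nat,
          (N0 <= m)%N -> (N0 <= n)%N -> (m <= c * n)%N -> (n <= c * m)%N ->
          forall rho : 'M[R[i]]_d, density rho ->
            prob_H1 (M m n) rho rho <= alpha) /\
      (forall rho sigma : 'M[R[i]]_d, density rho -> density sigma -> rho <> sigma ->
         exists K : R, exists N1 : nat, forall m n : nat,
           (N1 <= m)%N -> (N1 <= n)%N -> (m <= c * n)%N -> (n <= c * m)%N ->
           prob_H0 (M m n) sigma rho <=
             expR (- ((minn m n)%:R * trnorm (rho - sigma) ^+ 2) / (344 * d%:R ^+ 3)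
                   + K * Num.sqrt ((minn m n)%:R))).
Proof. move=> hd; exact: main_thm. Qed.
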